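(* Let $(\star)$ be a linear system over $\mathbb{F}_q$ with coefficient matrix $A\in\mathbb{F}_q^{m\times k}$ which is of type (RC), non-degenerate and irreducible, with $\ell$ column equivalence classes. Let $S\subseteq\mathbb{F}_q^n$ with $|S|\ge q^{1+\frac{\ell-1}{\ell}n}$, and assume that at least one of the following holds: (i) $\ell=m+1$; (ii) every column equivalence class sums to zero. Then there exists a solution $(x_1,\dots,x_k)\in S^k$ of $(\star)$ such that every $b\in\mathrm{Ann}_{\mathrm{bal}}(x_1,\dots,x_k)$ that preserves the column equivalence classes of $(\star)$ lies in the row space of $A$.
   Context: Solutions are tuples in $(\mathbb{F}_q^n)^k$ with $\sum_ja_{ij}x_j=0$ for all $i$. $\mathrm{Ann}_{\mathrm{bal}}(x_1,\dots,x_k)=\{b\in\mathbb{F}_q^k:\sum_jb_jx_j=0,\ \sum_jb_j=0\}$. Indices $j,j'$ are equivalent if columns $j,j'$ of $A$ are nonzero scalar multiples of one another; classes are column equivalence classes; a class sums to zero if its columns add up to the zero vector. A vector $b$ preserves the column equivalence classes if the matrix obtained by appending $b$ as an extra row to $A$ has the same column equivalence classes as $A$. Type (RC): every row of $A$ sums to $0$ and at most one column equivalence class has size $1$. Non-degenerate: rows of $A$ linearly independent and no zero column. Irreducible: not equivalent (same row space) to a system whose variables split into at least two classes with each equation only using (nonzero coefficients on) variables of one class. *)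

(* Defs.v *)
From HB Require Import structures.
From mathcomp Require Import all_boot all_order all_algebra.
Set Implicit Arguments. Unset Strict Implicit. Unset Printing Implicit Defensive.
Import GRing.Theory.
Local Open Scope ring_scope.

Section LinSys.
Variables (F : finFieldType) (m k n : nat).
Implicit Types (A : 'M[F]_(m, k)).

Definition colequiv p (M : 'M[F]_(p, k)) (j j' : 'I_k) : bool :=
  [exists c : F, (c != 0) && (col j M == c *: col j' M)].

Definition colclass p (M : 'M[F]_(p, k)) (j : 'I_k) : {set 'I_k} :=
  [set j' | colequiv M j j'].

Definition colclasses p (M : 'M[F]_(p, k)) : {set {set 'I_k}} :=
  [set colclass M j | j : 'I_k].

Definition nclasses A : nat := #|colclasses A|.

Definition class_sums_zero A (C : {set 'I_k}) : Prop :=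
  \sum_(j in C) col j A = 0.

Definition typeRC A : Prop :=
  (forall i : 'I_m, \sum_(j < k) A i j = 0) /\
  (#|[set C in colclasses A | #|C| == 1%N]| <= 1)%N.

Definition sys_nondegenerate A : Prop :=
  row_free A /\ forall j : 'I_k, col j A != 0.

Definition sys_reducible A : Prop :=
  exists (p : nat) (B : 'M[F]_(p, k)) (c : 'I_k -> nat),
    (B == A)%MS /\
    (exists j j' : 'I_k, c j != c j') /\
    (forall i : 'I_p, exists t : nat, forall j : 'I_k, B i j != 0 -> c j = t).

Definition sys_irreducible A : Prop := ~ sys_reducible A.

Definition is_solution A (x : 'I_k -> 'rV[F]_n) : Prop :=
  forall i : 'I_m, \sum_(j < k) A i j *: x j = 0.

Definition in_Ann_bal (x : 'I_k -> 'rV[F]_n) (b : 'rV[F]_k) : Prop :=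
  \sum_(j < k) b 0 j *: x j = 0 /\ \sum_(j < k) b 0 j = 0.

Definition preserves_classes A (b : 'rV[F]_k) : Prop :=
  forall j j' : 'I_k, colequiv (col_mx A b) j j' = colequiv A j j'.

End LinSys.

(* Main.v *)
Require Import Defs.
From Stdlib Require Import Classical.
From mathcomp Require Import zify.
From HB Require Import structures.
From mathcomp Require Import all_boot all_order all_algebra.
Set Implicit Arguments. Unset Strict Implicit. Unset Printing Implicit Defensive.
Import GRing.Theory.
Local Open Scope ring_scope.

Lemma card_bigcup_le (I T : finType) (P : pred I) (U : I -> {set T}) :
  (#|\bigcup_(i | P i) U i| <= \sum_(i | P i) #|U i|)%N.
Proof.
elim/big_rec2: _ => [|i x n _ IH]; first by rewrite cards0.
exact: leq_trans (leq_card_setU _ _) (leq_add (leqnn _) IH).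
Qed.

Lemma card_ker_le (F : finFieldType) p l n (M : 'M[F]_(p, l)) :
  (#|[set Z : 'M[F]_(l, n) | M *m Z == 0%R]| <= #|F| ^ (n * (l - \rank M)))%N.
Proof.
set K := row_base (kermx M^T).
have sub : [set Z : 'M[F]_(l, n) | M *m Z == 0%R] \subset
     [set (W *m K)^T | W in 'M[F]_(n, \rank (kermx M^T))].
  apply/subsetP => Z; rewrite inE => /eqP MZ.
  have : (Z^T <= K)%MS.
    rewrite eq_row_base; apply/sub_kermxP.
    by rewrite -trmx_mul MZ trmx0.
  case/submxP => W ZW; apply/imsetP; exists W; first by [].
  by rewrite -ZW trmxK.
apply: leq_trans (subset_leq_card sub) _.
apply: leq_trans (leq_imset_card _ _) _.
by rewrite card_mx mxrank_ker mxrank_tr.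
Qed.

Section Classes.
Variables (F : finFieldType) (m k : nat) (A : 'M[F]_(m, k)).
Hypothesis nzc : forall j, col j A != 0.

Lemma scal_col_uniq c c' j : c *: col j A = c' *: col j A -> c = c'.
Proof.
move/eqP; rewrite -subr_eq0 -scalerBl scaler_eq0 (negbTE (nzc j)) orbF.
by rewrite subr_eq0 => /eqP.
Qed.

Lemma colequivP j j' :
  reflect (exists2 c, c != 0 & col j A = c *: col j' A) (colequiv A j j').
Proof.
apply: (iffP existsP) => [[c /andP[c0 /eqP E]]|[c c0 E]]; exists c => //.
by rewrite c0 E eqxx.
Qed.

Lemma ceq_refl j : colequiv A j j.
Proof. by apply/colequivP; exists 1; rewrite ?oner_eq0 ?scale1r. Qed.

Lemma ceq_sym j j' : colequiv A j j' -> colequiv A j' j.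
Proof.
case/colequivP => c c0 E; apply/colequivP; exists c^-1; first by rewrite invr_eq0.
by rewrite E scalerA mulVf // scale1r.
Qed.

Lemma ceq_trans j1 j2 j3 : colequiv A j1 j2 -> colequiv A j2 j3 -> colequiv A j1 j3.
Proof.
case/colequivP => c c0 E; case/colequivP => d d0 E'; apply/colequivP.
by exists (c * d); rewrite ?mulf_neq0 // E E' scalerA.
Qed.

Definition rep j := odflt j [pick i | colequiv A j i].

Lemma rep_equiv j : colequiv A j (rep j).
Proof. by rewrite /rep; case: pickP => [i //|/(_ j)]; rewrite ceq_refl. Qed.

Lemma rep_eq j j' : colequiv A j j' -> rep j = rep j'.
Proof.
move=> E; rewrite /rep (@eq_pick _ _ (fun i => colequiv A j' i)).
  by case: pickP => [//|/(_ j')]; rewrite ceq_refl.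
move=> i /=; apply/idP/idP => H; first exact: ceq_trans (ceq_sym E) H.
exact: ceq_trans E H.
Qed.

Lemma rep_idem j : rep (rep j) = rep j.
Proof. exact/rep_eq/ceq_sym/rep_equiv. Qed.

Definition lam j := odflt 0 [pick c | (c != 0) && (col j A == c *: col (rep j) A)].

Lemma lamP j : lam j != 0 /\ col j A = lam j *: col (rep j) A.
Proof.
rewrite /lam; case: pickP => [c /andP[c0 /eqP E] //|H].
by case/colequivP: (rep_equiv j) => c c0 E; have := H c; rewrite c0 E eqxx.
Qed.

Lemma lam_entry i j : A i j = lam j * A i (rep j).
Proof.
have := congr1 (fun M : 'cV_m => M i 0) (lamP j).2.
by rewrite /= !mxE.
Qed.

Lemma lam_rep r : rep r = r -> lam r = 1.
Proof.
move=> rr; apply: (@scal_col_uniq _ _ r); rewrite scale1r.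
by have [_ E] := lamP r; rewrite rr in E.
Qed.

Definition R := [set rep j | j : 'I_k].

Lemma inR r : (r \in R) = (rep r == r).
Proof.
apply/imsetP/eqP => [[j _ ->]|<-]; first by rewrite rep_idem.
by exists r.
Qed.

Lemma repR j : rep j \in R.
Proof. by rewrite inR rep_idem. Qed.

Definition e (t : 'I_#|R|) : 'I_k := enum_val t.
Definition idx j : 'I_#|R| := enum_rank_in (repR j) (rep j).

Lemma eR t : e t \in R.
Proof. exact: enum_valP. Qed.

Lemma rep_e t : rep (e t) = e t.
Proof. by apply/eqP; rewrite -inR eR. Qed.

Lemma e_idx j : e (idx j) = rep j.
Proof. by rewrite /e /idx enum_rankK_in // repR. Qed.

Lemma idx_eq j t : (idx j == t) = (rep j == e t).
Proof.
rewrite -e_idx; apply/eqP/eqP => [->//|]; exact: enum_val_inj.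
Qed.

Lemma idx_e t : idx (e t) = t.
Proof. by apply/eqP; rewrite idx_eq rep_e. Qed.

Lemma sum_by_class (V : lmodType F) (c : 'I_k -> F) (w : 'I_k -> V) :
  (forall j, c j = lam j * c (rep j)) ->
  \sum_j c j *: w j = \sum_(t < #|R|) c (e t) *: \sum_(j | idx j == t) lam j *: w j.
Proof.
move=> hc; rewrite (partition_big idx predT) //=; apply: eq_bigr => t _.
rewrite scaler_sumr; apply: eq_bigr => j /eqP <-.
by rewrite hc e_idx scalerA mulrC.
Qed.

Definition Vm : 'M[F]_(m, #|R|) := \matrix_(i, t) A i (e t).
Definition Lm : 'M[F]_(#|R|, k) := \matrix_(t, j) (if idx j == t then lam j else 0).

Lemma rowL_sum (b : 'rV[F]_#|R|) j : (b *m Lm) 0 j = b 0 (idx j) * lam j.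
Proof.
rewrite mxE (bigD1 (idx j)) //= big1 => [|t /negbTE nt]; last first.
  by rewrite mxE eq_sym nt mulr0.
by rewrite mxE eqxx addr0.
Qed.

Lemma A_VL : A = Vm *m Lm.
Proof.
apply/matrixP => i j; rewrite mxE (bigD1 (idx j)) //= big1 => [|t /negbTE nt]; last first.
  by rewrite !mxE eq_sym nt mulr0.
by rewrite !mxE eqxx addr0 e_idx mulrC -lam_entry.
Qed.

Lemma rowfree_V : row_free A -> row_free Vm.
Proof.
rewrite /row_free => /eqP rA; rewrite eqn_leq rank_leq_row /=.
by rewrite -{1}rA {1}A_VL mxrankM_maxl.
Qed.

Lemma b_VL (b : 'rV[F]_k) : (forall j, b 0 j = lam j * b 0 (rep j)) ->
  b = (\row_t b 0 (e t)) *m Lm.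
Proof.
move=> hb; apply/matrixP => i j; rewrite (ord1 i) rowL_sum mxE e_idx.
by rewrite hb mulrC.
Qed.

Lemma b_sub (b : 'rV[F]_k) : (forall j, b 0 j = lam j * b 0 (rep j)) ->
  (\row_t b 0 (e t) <= Vm)%MS -> (b <= A)%MS.
Proof.
move=> hb /submxP [D E]; rewrite (b_VL hb) E -mulmxA -A_VL; exact: submxMl.
Qed.

Lemma pres_lam (b : 'rV[F]_k) : preserves_classes A b ->
  forall j, b 0 j = lam j * b 0 (rep j).
Proof.
move=> H j; have := H j (rep j); rewrite rep_equiv.
case/existsP => c /andP [c0 /eqP E].
rewrite !col_col_mx scale_col_mx in E.
case/eq_col_mx: E => E1 E2.
have cl : c = lam j by apply: (@scal_col_uniq _ _ (rep j)); rewrite -E1 (lamP j).2.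
have := congr1 (fun M : 'cV_1 => M 0 0) E2; rewrite /= !mxE => ->.
by rewrite cl.
Qed.


Lemma colclass_rep j : colclass A j = colclass A (rep j).
Proof.
apply/setP => x; rewrite !inE; apply/idP/idP => H.
  exact: ceq_trans (ceq_sym (rep_equiv j)) H.
exact: ceq_trans (rep_equiv j) H.
Qed.

Lemma in_class_e t j : (j \in colclass A (e t)) = (idx j == t).
Proof.
rewrite inE idx_eq; apply/idP/eqP => [H|E].
  by rewrite -(rep_eq H) rep_e.
by rewrite -E; apply: ceq_sym; apply: rep_equiv.
Qed.

Lemma class_sum t : \sum_(j in colclass A (e t)) col j A =
   (\sum_(j | idx j == t) lam j) *: col (e t) A.
Proof.
rewrite scaler_suml; apply: eq_big => j; first by rewrite in_class_e.
by rewrite in_class_e => /eqP <-; rewrite e_idx (lamP j).2.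
Qed.

Lemma class_in t : colclass A (e t) \in colclasses A.
Proof. by apply/imsetP; exists (e t). Qed.

Lemma nclassesE : nclasses A = #|R|.
Proof.
rewrite /nclasses.
have -> : colclasses A = colclass A @: R.
  apply/setP => C; apply/imsetP/imsetP => [[j _ ->]|[r _ ->]].
    by exists (rep j); [exact: repR|exact: colclass_rep].
  by exists r.
apply: card_in_imset => r r' rR r'R E.
have : r' \in colclass A r by rewrite E inE ceq_refl.
rewrite inE => /rep_eq; rewrite inR in rR; rewrite inR in r'R.
by rewrite (eqP rR) (eqP r'R).
Qed.

Lemma sum_by_class_s (c : 'I_k -> F) :
  (forall j, c j = lam j * c (rep j)) ->
  \sum_j c j = \sum_(t < #|R|) c (e t) * \sum_(j | idx j == t) lam j.
Proof.
move=> hc; rewrite (partition_big idx predT) //=; apply: eq_bigr => t _.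
rewrite mulr_sumr; apply: eq_bigr => j /eqP <-.
by rewrite hc e_idx mulrC.
Qed.


Variables (n : nat) (S : {set 'rV[F]_n}).

Definition Zf (g : {ffun 'I_#|R| -> 'rV[F]_n}) : 'M[F]_(#|R|, n) :=
  \matrix_(t, j) g t 0 j.

Lemma rowZ g g' t : row t (Zf g - Zf g') = g t - g' t.
Proof. by apply/rowP => j; rewrite !mxE. Qed.

Definition xg (g g' : {ffun 'I_#|R| -> 'rV[F]_n}) (j : 'I_k) : 'rV[F]_n :=
  if rep j == j then g (idx j) else g' (idx j).

Hypothesis Hz : forall t, \sum_(j | idx j == t) lam j = 0.

Lemma class_comb g g' t : \sum_(j | idx j == t) lam j *: xg g g' j = g t - g' t.
Proof.
have Ht := Hz t; rewrite (bigD1 (e t)) ?idx_e //= in Ht.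
rewrite lam_rep ?rep_e // in Ht.
rewrite (bigD1 (e t)) ?idx_e //= lam_rep ?rep_e // scale1r /xg rep_e eqxx idx_e.
have -> : \sum_(j | (idx j == t) && (j != e t)) lam j *: xg g g' j =
          (\sum_(j | (idx j == t) && (j != e t)) lam j) *: g' t.
  rewrite scaler_suml; apply: eq_bigr => j /andP [/eqP jt nj].
  rewrite /xg; have -> : rep j == j = false.
    by apply/negbTE; rewrite -e_idx jt eq_sym.
  by rewrite jt.
have -> : \sum_(j | (idx j == t) && (j != e t)) lam j = -1.
  by move/eqP: Ht; rewrite addrC addr_eq0 => /eqP.
by rewrite scaleN1r.
Qed.

Lemma comb_x g g' (c : 'I_k -> F) : (forall j, c j = lam j * c (rep j)) ->
  \sum_j c j *: xg g g' j = (\row_t c (e t)) *m (Zf g - Zf g').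
Proof.
move=> hc; rewrite (sum_by_class _ hc) mulmx_sum_row; apply: eq_bigr => t _.
by rewrite class_comb rowZ mxE.
Qed.

Definition good (g g' : {ffun 'I_#|R| -> 'rV[F]_n}) := Vm *m Zf g = Vm *m Zf g' /\
  forall mu : 'rV[F]_#|R|, mu *m (Zf g - Zf g') = 0 -> (mu <= Vm)%MS.

Lemma good_x (g g' : {ffun 'I_#|R| -> 'rV[F]_n}) : (forall t, g t \in S) -> (forall t, g' t \in S) -> good g g' ->
  exists x : 'I_k -> 'rV[F]_n,
    (forall j, x j \in S) /\ is_solution A x /\
    forall b : 'rV[F]_k, in_Ann_bal x b -> preserves_classes A b ->
      (b <= A)%MS.
Proof.
move=> gS g'S [hV hmu]; exists (xg g g'); split; first by move=> j; rewrite /xg; case: ifP.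
split.
  move=> i; rewrite (comb_x _ _ (lam_entry i)).
  have -> : \row_t A i (e t) = row i Vm by apply/rowP => t; rewrite !mxE.
  by rewrite -row_mul mulmxBr hV subrr row0.
move=> b [hb _] hp; apply: (b_sub (pres_lam hp)); apply: hmu.
by rewrite -(comb_x _ _ (pres_lam hp)).
Qed.


Lemma exists_good : row_free Vm ->
  (#|F| ^ (#|R| + (#|R|).-1 * n) <= #|S| ^ #|R|)%N ->
  exists g g' : {ffun 'I_#|R| -> 'rV[F]_n},
    (forall t, g t \in S) /\ (forall t, g' t \in S) /\ good g g'.
Proof.
move=> rf Hc; apply: NNPP => nog.
set l := #|R| in Hc nog *.
set T := [set g : {ffun 'I_l -> 'rV[F]_n} | g \in ffun_on (mem S)].
have memT g : (g \in T) = [forall t, g t \in S].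
  rewrite inE; apply/ffun_onP/forallP => H t; exact: H.
set Bm := [set mu : 'rV[F]_l | ~~ (mu <= Vm)%MS].
set BZ := \bigcup_(mu in Bm) [set Z : 'M[F]_(l, n) | col_mx Vm mu *m Z == 0%R].
set hm := fun g : {ffun 'I_l -> 'rV[F]_n} => Vm *m Zf g.
have fib M : (#|[set g in T | hm g == M]| <= #|BZ|)%N.
  case: (set_0Vmem [set g in T | hm g == M]) => [->|[g' g'P]]; first by rewrite cards0.
  rewrite inE memT in g'P; case/andP: g'P => /forallP g'S /eqP hg'.
  rewrite -(@card_in_imset _ _ (fun g => Zf g - Zf g')); last first.
    move=> g1 g2 _ _ /addIr E; apply/ffunP => t.
    by have := congr1 (row t) E; rewrite !rowK.
  apply: subset_leq_card; apply/subsetP => Z /imsetP [g].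
  rewrite inE memT => /andP [/forallP gS /eqP hg] ->.
  have : ~ good g g'.
    by move=> gd; apply: nog; exists g, g'; split.
  move=> ng; apply: NNPP => nB; apply: ng; split; first by rewrite /hm in hg hg'; rewrite hg hg'.
  move=> mu muZ; apply: NNPP => nmu; apply: nB; apply/bigcupP; exists mu.
    by rewrite inE; apply/negP.
  rewrite inE mul_col_mx muZ mulmxBr.
  by rewrite /hm in hg hg'; rewrite hg hg' subrr col_mx0.
have cardT : #|T| = (#|S| ^ l)%N.
  by rewrite cardsE card_ffun_on card_ord.
have q0 : (0 < #|F|)%N by apply/card_gt0P; exists 0.
have Tle : (#|T| <= #|F| ^ (m * n) * #|BZ|)%N.
  rewrite -sum1_card (partition_big hm predT) //=.
  rewrite -card_mx -sum_nat_const; apply: leq_sum => M _.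
  apply: leq_trans (fib M); rewrite -sum1_card; apply: eq_leq; apply: eq_bigl => g.
  by rewrite !inE.
have rV : \rank Vm = m by apply/eqP.
have rk mu : mu \in Bm -> (m.+1 <= \rank (col_mx Vm mu))%N.
  rewrite inE => nmu; rewrite -addsmxE.
  move: (ltn_leqif (mxrank_leqif_sup (addsmxSl Vm mu))).
  by rewrite rV addsmx_sub submx_refl /= nmu => ->.
have BZle : (#|BZ| <= #|Bm| * #|F| ^ (n * (l - m.+1)))%N.
  apply: leq_trans (card_bigcup_le _ _) _.
  rewrite -sum_nat_const; apply: leq_sum => mu muB.
  apply: leq_trans (card_ker_le _ _) _.
  by apply: leq_pexp2l => //; rewrite leq_mul2l leq_sub2l ?rk ?orbT.
case: (set_0Vmem Bm) => [B0|[mu0 mu0B]].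
  move: Tle BZle; rewrite B0 cards0 mul0n leqn0 => Tle /eqP BZ0.
  rewrite BZ0 muln0 leqn0 cardT in Tle.
  move: Hc; rewrite (eqP Tle) leqn0 expn_eq0; case/andP => /eqP qF.
  by rewrite qF in q0.
have lm : (m.+1 <= l)%N := leq_trans (rk _ mu0B) (rank_leq_col _).
have Bml : (#|Bm| < #|F| ^ l)%N.
  have -> : (#|F| ^ l = #|[set: 'rV[F]_l]|)%N by rewrite cardsT card_mx mul1n.
  apply: proper_card; rewrite properT; apply/negP => /eqP BT.
  have : (0 : 'rV[F]_l) \in Bm by rewrite BT inE.
  by rewrite inE sub0mx.
have := leq_trans Hc (leq_trans (eq_leq (esym cardT)) (leq_trans Tle (leq_mul (leqnn _) BZle))).
have -> : (l + l.-1 * n = m * n + (l + n * (l - m.+1)))%N.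
  have -> : l = (m.+1 + (l - m.+1))%N by rewrite subnKC.
  set a := (l - m.+1)%N; rewrite addSn /=; lia.
rewrite !expnD leq_pmul2l ?expn_gt0 ?q0 // leq_pmul2r ?expn_gt0 ?q0 //.
by rewrite leqNgt Bml.
Qed.


Lemma nonzero_case (a : 'rV[F]_n) : a \in S -> row_free A ->
  (forall i, \sum_j A i j = 0) -> #|R| = m.+1 ->
  (exists t, \sum_(j | idx j == t) lam j != 0) ->
  exists x : 'I_k -> 'rV[F]_n,
    (forall j, x j \in S) /\ is_solution A x /\
    forall b : 'rV[F]_k, in_Ann_bal x b -> preserves_classes A b ->
      (b <= A)%MS.
Proof.
move=> aS rf rowsum lR [t0 nt0]; exists (fun _ => a); split; first by [].
split.
  by move=> i; rewrite -scaler_suml rowsum scale0r.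
move=> b [_ hbal] hp; have hb := pres_lam hp; apply: (b_sub hb).
set mu := \row_t b 0 (e t).
set s := \col_t (\sum_(j | idx j == t) lam j) : 'cV[F]_#|R|.
have ms : mu *m s = 0.
  apply/matrixP => i j; rewrite (ord1 i) (ord1 j) !mxE -[RHS]hbal (sum_by_class_s hb).
  by apply: eq_bigr => t _; rewrite !mxE.
have Vs : Vm *m s = 0.
  apply/matrixP => i j; rewrite (ord1 j) !mxE.
  transitivity (\sum_j0 A i j0); last exact: rowsum i.
  rewrite (sum_by_class_s (lam_entry i)).
  by apply: eq_bigr => t _; rewrite !mxE.
have s0 : s != 0.
  apply/eqP => s0; have := congr1 (fun M : 'cV[F]_#|R| => M t0 0) s0.
  by rewrite !mxE; apply/eqP.
have rs : \rank s = 1%N.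
  by apply/eqP; rewrite eqn_leq rank_leq_col lt0n mxrank_eq0 s0.
have rk : \rank (kermx s) = m by rewrite mxrank_ker rs lR subn1.
have Vk : (Vm <= kermx s)%MS by apply/sub_kermxP.
have kV : (kermx s <= Vm)%MS.
  by rewrite -(mxrank_leqif_sup Vk).2 rk (eqP (rowfree_V rf)).
by apply: submx_trans kV; apply/sub_kermxP.
Qed.

End Classes.

Unset Implicit Arguments.

Theorem lemma6p5 (F : finFieldType) (m k n : nat) (A : 'M[F]_(m, k))
    (S : {set 'rV[F]_n}) :
  typeRC A -> sys_nondegenerate A -> sys_irreducible A ->
  (* |S| >= q^(1 + (l-1)n/l), raised to the l-th power, l = nclasses A *)
  (#|F| ^ (nclasses A + (nclasses A).-1 * n) <= #|S| ^ nclasses A)%N ->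
  (nclasses A = m.+1 \/ forall C, C \in colclasses A -> class_sums_zero A C) ->
  exists x : 'I_k -> 'rV[F]_n,
    (forall j, x j \in S) /\ is_solution A x /\
    forall b : 'rV[F]_k, in_Ann_bal x b -> preserves_classes A b ->
      (b <= A)%MS.
Proof.
move=> [rowsum _] [rf nzc] _ Hc Hcase.
rewrite nclassesE in Hc Hcase.
case: (classic (forall C, C \in colclasses A -> class_sums_zero A C)) => [Hall|Hnot].
  have Hz t : \sum_(j | idx A j == t) lam A j = 0.
    have := Hall _ (class_in t); rewrite /class_sums_zero class_sum //.
    by move/eqP; rewrite scaler_eq0 (negbTE (nzc _)) orbF => /eqP.
  have [g [g' [gS [g'S gd]]]] := exists_good (rowfree_V rf) Hc.
  exact: (good_x nzc Hz gS g'S gd).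
case: Hcase => [lR|//].
have [t nt] : exists t, \sum_(j | idx A j == t) lam A j != 0.
  apply: NNPP => H; apply: Hnot => C /imsetP [j _ ->].
  rewrite /class_sums_zero (colclass_rep A j) -(e_idx A j) class_sum //.
  have -> : \sum_(j0 | idx A j0 == idx A j) lam A j0 = 0.
    by apply: NNPP => H'; apply: H; exists (idx A j); apply/eqP.
  by rewrite scale0r.
have [a aS] : exists a, a \in S.
  apply/card_gt0P; rewrite lt0n; apply/eqP => S0.
  move: Hc; rewrite lR S0 exp0n // leqn0 expn_eq0 => /andP [/eqP qF _].
  have : (0 < #|F|)%N by apply/card_gt0P; exists 0.
  by rewrite qF.
exact: (nonzero_case nzc aS rf rowsum lR (ex_intro _ t nt)).
Qed.
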